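(* Let $T_{ij,k\ell}\ge0$ ($i,j,k,\ell\in\mathbb N_0$) satisfy $\sum_{i,j\ge0}T_{ij,k\ell}=1$ for all $k,\ell\in\mathbb N_0$, and define $\mathcal R:\ell^1(\mathbb N_0)\to\ell^1(\mathbb N_0)$ by $\mathcal R(0)=0$ and $$\mathcal R(x)_i=\frac{1}{\|x\|_1}\sum_{j,k,\ell\ge0}T_{ij,k\ell}\,x_k x_\ell\qquad (x\neq0).$$ Then $\|\mathcal R(x)-\mathcal R(y)\|_1\le 3\|x-y\|_1$ for all $x,y\in\ell^1(\mathbb N_0)$, and $\|\mathcal R(x)-\mathcal R(y)\|_1\le 2\|x-y\|_1$ for all $x,y\in\mathcal M_r$.
   Context: $\ell^1(\mathbb N_0)$ is the space of real sequences with $\|x\|_1=\sum_{k\ge0}|x_k|<\infty$. $\mathcal M_r$ ($r>0$) denotes the set of (measures on $\mathbb N_0$ identified with) elements $x\in\ell^1(\mathbb N_0)$ of total mass $\|x\|_1=r$. *)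

(* Defs.v *)
From Stdlib Require Import Reals ClassicalEpsilon.
From Coquelicot Require Import Coquelicot.
Open Scope R_scope.

Definition in_l1 (x : nat -> R) : Prop := ex_series (fun k => Rabs (x k)).

Definition norm1 (x : nat -> R) : R := Series (fun k => Rabs (x k)).

Definition in_M (r : R) (x : nat -> R) : Prop := in_l1 x /\ norm1 x = r.

(* The operator R: R(0) = 0, and for x <> 0,
   R(x)_i = (1/||x||_1) * sum_{j,k,l} T_{ij,kl} x_k x_l,
   the (absolutely convergent) triple sum being computed as the iterated
   series sum_k sum_l (x_k x_l sum_j T_{ij,kl}). *)
Definition Rop (T : nat -> nat -> nat -> nat -> R) (x : nat -> R) : nat -> R :=
  fun i =>
    if excluded_middle_informative (x = fun _ => 0) then 0
    else / norm1 x *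
         Series (fun k => Series (fun l =>
           x k * x l * Series (fun j => T i j k l))).

(* Main.v *)
Require Import Defs.
From Stdlib Require Import Reals Lra Classical FunctionalExtensionality ClassicalEpsilon.
From Coquelicot Require Import Coquelicot.
Open Scope R_scope.

Lemma sum_SnR (a : nat -> R) n : sum_n a (S n) = sum_n a n + a (S n).
Proof. exact (sum_Sn a n). Qed.
Lemma sum_OR (a : nat -> R) : sum_n a 0 = a 0%nat.
Proof. exact (sum_O a). Qed.

Lemma ex_le (a b : nat -> R) : (forall n, Rabs (a n) <= b n) -> ex_series b -> ex_series a.
Proof. intros H Hb. apply (ex_series_le a b); [intros n; exact (H n) | exact Hb]. Qed.

Lemma ser_nonneg (a : nat -> R) : (forall n, 0 <= a n) -> 0 <= Series a.
Proof.
  intros H. unfold Series.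
  assert (Hm : forall n, 0 <= sum_n a n).
  { induction n. rewrite sum_OR; auto. rewrite sum_SnR. specialize (H (S n)); lra. }
  assert (Rbar_le (Finite 0) (Lim_seq (sum_n a))).
  { rewrite <- (Lim_seq_const 0). apply Lim_seq_le_loc. exists 0%nat; intros; auto. }
  destruct (Lim_seq (sum_n a)); simpl in *; lra.
Qed.

Lemma ser_abs_le (a b : nat -> R) : (forall n, Rabs (a n) <= b n) -> ex_series b ->
  Rabs (Series a) <= Series b.
Proof.
  intros H Hb.
  assert (Ha : ex_series (fun n => Rabs (a n))).
  { apply (ex_le _ b); auto. intros n; rewrite Rabs_Rabsolu; auto. }
  eapply Rle_trans. apply Series_Rabs; auto.
  apply Series_le; auto. intros n; split; [apply Rabs_pos | auto].
Qed.

Lemma dom2 (u v : nat -> nat -> R) :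
  (forall k l, Rabs (u k l) <= v k l) -> (forall k, ex_series (v k)) ->
  ex_series (fun k => Series (v k)) ->
  (forall k, ex_series (u k)) /\ ex_series (fun k => Series (u k)) /\
  Rabs (Series (fun k => Series (u k))) <= Series (fun k => Series (v k)).
Proof.
  intros H Hv Hv2.
  assert (H1 : forall k, ex_series (u k)). { intros k; apply (ex_le _ (v k)); auto. }
  assert (H2 : forall k, Rabs (Series (u k)) <= Series (v k)).
  { intros k; apply ser_abs_le; auto. }
  split; auto. split. apply (ex_le _ _ H2 Hv2).
  apply ser_abs_le; auto.
Qed.

Lemma psum_le (a : nat -> R) N : (forall n, 0 <= a n) -> ex_series a -> sum_n a N <= Series a.
Proof.
  intros H Ha. apply Series_correct in Ha.
  apply (is_lim_seq_incr_compare (sum_n a)). exact Ha.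
  intros n; rewrite sum_SnR; specialize (H (S n)); lra.
Qed.

Lemma bounded_ex (a : nat -> R) B : (forall n, 0 <= a n) -> (forall N, sum_n a N <= B) ->
  ex_series a /\ Series a <= B.
Proof.
  intros H HB.
  destruct (ex_finite_lim_seq_incr (sum_n a) B) as [l Hl].
  { intros n; rewrite sum_SnR; specialize (H (S n)); lra. }
  { auto. }
  assert (Hs : is_series a l) by exact Hl.
  split. exists l; auto.
  rewrite (is_series_unique _ _ Hs).
  assert (Rbar_le l B). { apply (is_lim_seq_le (sum_n a) (fun _ => B)); auto. apply is_lim_seq_const. }
  simpl in H0; auto.
Qed.

Lemma sum_nonneg (a : nat -> R) N : (forall n, 0 <= a n) -> 0 <= sum_n a N.
Proof. intros H. induction N. rewrite sum_OR; auto. rewrite sum_SnR. specialize (H (S N)); lra. Qed.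

Lemma term_le_sum (a : nat -> R) N : (forall n, 0 <= a n) -> a N <= sum_n a N.
Proof.
  intros H. destruct N. rewrite sum_OR; lra.
  rewrite sum_SnR. pose proof (sum_nonneg a N H). lra.
Qed.

Lemma sum_le (a b : nat -> R) N : (forall n, a n <= b n) -> sum_n a N <= sum_n b N.
Proof. intros H. induction N. rewrite !sum_OR; auto. rewrite !sum_SnR. specialize (H (S N)); lra. Qed.

Definition SS (T : nat -> nat -> nat -> nat -> R) i k l := Series (fun j => T i j k l).

Lemma SS_nonneg T (T_nonneg : forall i j k l, 0 <= T i j k l) i k l : 0 <= SS T i k l.
Proof. apply ser_nonneg; auto. Qed.

Lemma SS_sum T (T_nonneg : forall i j k l, 0 <= T i j k l)
  (T_sum1 : forall k l, is_series (fun i => Series (fun j => T i j k l)) 1) N k l :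
  0 <= sum_n (fun i => SS T i k l) N <= 1.
Proof.
  split. apply sum_nonneg; intros; apply SS_nonneg; auto.
  rewrite <- (is_series_unique _ _ (T_sum1 k l)).
  apply psum_le. intros; apply SS_nonneg; auto. exists 1; auto.
Qed.

Lemma SS_le1 T (T_nonneg : forall i j k l, 0 <= T i j k l)
  (T_sum1 : forall k l, is_series (fun i => Series (fun j => T i j k l)) 1) i k l :
  0 <= SS T i k l <= 1.
Proof.
  split. apply SS_nonneg; auto.
  eapply Rle_trans. apply (term_le_sum (fun i => SS T i k l) i). intros; apply SS_nonneg; auto.
  apply SS_sum; auto.
Qed.

Lemma core T (T_nonneg : forall i j k l, 0 <= T i j k l)
  (T_sum1 : forall k l, is_series (fun i => Series (fun j => T i j k l)) 1)
  (D : nat -> R) (c w : nat -> nat -> R) B :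
  (forall i, D i = Series (fun k => Series (fun l => c k l * SS T i k l))) ->
  (forall k l, Rabs (c k l) <= w k l) -> (forall k, ex_series (w k)) ->
  ex_series (fun k => Series (w k)) -> Series (fun k => Series (w k)) <= B ->
  ex_series (fun i => Rabs (D i)) /\ Series (fun i => Rabs (D i)) <= B.
Proof.
  intros HD Hcw Hw1 Hw2 HB.
  assert (Hw0 : forall k l, 0 <= w k l).
  { intros k l; eapply Rle_trans; [apply Rabs_pos | apply Hcw]. }
  assert (Hc : forall cc, (forall k l, 0 <= cc k l <= 1) ->
     (forall k, ex_series (fun l => w k l * cc k l)) /\
     ex_series (fun k => Series (fun l => w k l * cc k l)) /\
     Series (fun k => Series (fun l => w k l * cc k l)) <= Series (fun k => Series (w k))).
  { intros cc Hcc. destruct (dom2 (fun k l => w k l * cc k l) w) as [A1 [A2 A3]]; auto.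
    intros k l. specialize (Hcc k l); specialize (Hw0 k l).
    rewrite Rabs_right by nra. nra.
    split; auto. split; auto. eapply Rle_trans; [apply Rle_abs | exact A3]. }
  assert (HDi : forall i, Rabs (D i) <= Series (fun k => Series (fun l => w k l * SS T i k l))).
  { intros i. rewrite HD.
    destruct (Hc (fun k l => SS T i k l)) as [B1 [B2 B3]].
    intros; apply SS_le1; auto.
    destruct (dom2 (fun k l => c k l * SS T i k l) (fun k l => w k l * SS T i k l)) as [A1 [A2 A3]]; auto.
    intros k l. rewrite Rabs_mult. pose proof (SS_le1 T T_nonneg T_sum1 i k l).
    rewrite (Rabs_right (SS T i k l)) by lra. apply Rmult_le_compat_r; [lra | auto]. }
  assert (Hswap : forall N, sum_n (fun i => Series (fun k => Series (fun l => w k l * SS T i k l))) N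
      = Series (fun k => Series (fun l => w k l * sum_n (fun i => SS T i k l) N))).
  { induction N.
    - rewrite sum_OR. apply Series_ext; intros k; apply Series_ext; intros l. rewrite sum_OR; auto.
    - rewrite sum_SnR, IHN.
      destruct (Hc (fun k l => sum_n (fun i => SS T i k l) N)) as [B1 [B2 B3]].
      intros; apply SS_sum; auto.
      destruct (Hc (fun k l => SS T (S N) k l)) as [C1 [C2 C3]].
      intros; apply SS_le1; auto.
      rewrite <- Series_plus by auto. apply Series_ext; intros k.
      rewrite <- Series_plus by auto. apply Series_ext; intros l.
      rewrite sum_SnR. ring. }
  apply bounded_ex. intros; apply Rabs_pos.
  intros N. eapply Rle_trans. apply sum_le. exact HDi.
  rewrite Hswap. destruct (Hc (fun k l => sum_n (fun i => SS T i k l) N)) as [B1 [B2 B3]].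
  intros; apply SS_sum; auto. lra.
Qed.

Lemma zero_ser : ex_series (fun _ : nat => 0) /\ Series (fun _ : nat => 0) = 0.
Proof.
  split.
  - apply (bounded_ex _ 0). intros; lra. intros N; induction N.
    rewrite sum_OR; lra. rewrite sum_SnR; lra.
  - rewrite (Series_ext _ (fun n : nat => 0 * 0)) by (intros; ring).
    rewrite Series_scal_l; ring.
Qed.

Lemma prod_ser (a b : nat -> R) : (forall n, 0 <= a n) -> (forall n, 0 <= b n) ->
  ex_series a -> ex_series b ->
  (forall k, ex_series (fun l => a k * b l)) /\ ex_series (fun k => Series (fun l => a k * b l)) /\
  Series (fun k => Series (fun l => a k * b l)) = Series a * Series b.
Proof.
  intros Ha Hb Ea Eb.
  assert (E : forall k, Series (fun l => a k * b l) = a k * Series b).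
  { intros; apply Series_scal_l. }
  split. intros k. apply (ex_series_scal_l (a k) b Eb).
  split. apply (ex_series_ext (fun k => a k * Series b)). intros; rewrite E; auto.
  apply ex_series_scal_r; auto.
  rewrite (Series_ext _ (fun k => a k * Series b)) by auto. apply Series_scal_r.
Qed.

Lemma add_ser (w1 w2 : nat -> nat -> R) :
  (forall k, ex_series (w1 k)) -> ex_series (fun k => Series (w1 k)) ->
  (forall k, ex_series (w2 k)) -> ex_series (fun k => Series (w2 k)) ->
  (forall k, ex_series (fun l => w1 k l + w2 k l)) /\
  ex_series (fun k => Series (fun l => w1 k l + w2 k l)) /\
  Series (fun k => Series (fun l => w1 k l + w2 k l)) =
  Series (fun k => Series (w1 k)) + Series (fun k => Series (w2 k)).
Proof.
  intros A1 A2 B1 B2.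
  assert (E : forall k, Series (fun l => w1 k l + w2 k l) = Series (w1 k) + Series (w2 k)).
  { intros; apply Series_plus; auto. }
  split. intros k; apply (ex_series_plus (w1 k) (w2 k)); auto.
  split. apply (ex_series_ext (fun k => Series (w1 k) + Series (w2 k))). intros; rewrite E; auto.
  apply (ex_series_plus (fun k => Series (w1 k)) (fun k => Series (w2 k))); auto.
  rewrite (Series_ext _ (fun k => Series (w1 k) + Series (w2 k))) by auto.
  apply Series_plus; auto.
Qed.

Lemma norm1_nonneg x : 0 <= norm1 x.
Proof. apply ser_nonneg; intros; apply Rabs_pos. Qed.

Lemma norm1_pos x : in_l1 x -> x <> (fun _ => 0) -> 0 < norm1 x.
Proof.
  intros Hx Hne.
  destruct (not_all_ex_not _ _ (fun H => Hne (functional_extensionality _ _ H))) as [n Hn].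
  pose proof (psum_le (fun k => Rabs (x k)) n (fun _ => Rabs_pos _) Hx).
  pose proof (term_le_sum (fun k => Rabs (x k)) n (fun _ => Rabs_pos _)).
  pose proof (Rabs_pos_lt _ Hn). unfold norm1. simpl in *. lra.
Qed.

Lemma l1_diff x y : in_l1 x -> in_l1 y -> in_l1 (fun i => x i - y i).
Proof.
  intros Hx Hy. unfold in_l1. apply (ex_le _ (fun n => Rabs (x n) + Rabs (y n))).
  intros n. rewrite Rabs_Rabsolu. unfold Rminus. eapply Rle_trans. apply Rabs_triang.
  rewrite Rabs_Ropp; lra.
  apply (ex_series_plus (fun n => Rabs (x n)) (fun n => Rabs (y n))); auto.
Qed.

Lemma norm1_tri x y : in_l1 x -> in_l1 y -> norm1 x <= norm1 y + norm1 (fun i => x i - y i).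
Proof.
  intros Hx Hy. unfold norm1.
  rewrite <- Series_plus by (auto; apply l1_diff; auto).
  apply Series_le. intros n; split. apply Rabs_pos.
  replace (x n) with (y n + (x n - y n)) at 1 by ring. apply Rabs_triang.
  apply (ex_series_plus (fun n => Rabs (y n)) (fun n => Rabs (x n - y n))); auto. apply l1_diff; auto.
Qed.

Lemma norm1_sym x y : norm1 (fun i => x i - y i) = norm1 (fun i => y i - x i).
Proof. unfold norm1. apply Series_ext; intros; apply Rabs_minus_sym. Qed.

Lemma Rop_rep T x : x <> (fun _ => 0) -> forall i,
  Rop T x i = Series (fun k => Series (fun l => (/ norm1 x * (x k * x l)) * SS T i k l)).
Proof.
  intros Hx i. unfold Rop. destruct (excluded_middle_informative _). contradiction.
  rewrite <- Series_scal_l. apply Series_ext; intros k.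
  rewrite <- Series_scal_l. apply Series_ext; intros l. unfold SS. ring.
Qed.

Lemma Rop_zero T x : x = (fun _ => 0) -> forall i, Rop T x i = 0.
Proof. intros Hx i. unfold Rop. destruct (excluded_middle_informative _); auto. contradiction. Qed.

Lemma rep_ex T (T_nonneg : forall i j k l, 0 <= T i j k l)
  (T_sum1 : forall k l, is_series (fun i => Series (fun j => T i j k l)) 1) x a i :
  in_l1 x ->
  (forall k, ex_series (fun l => a * (x k * x l) * SS T i k l)) /\
  ex_series (fun k => Series (fun l => a * (x k * x l) * SS T i k l)).
Proof.
  intros Hx.
  destruct (prod_ser (fun k => Rabs a * Rabs (x k)) (fun l => Rabs (x l))) as [P1 [P2 P3]].
  intros; apply Rmult_le_pos; apply Rabs_pos. intros; apply Rabs_pos.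
  apply (ex_series_scal_l (Rabs a) (fun k => Rabs (x k))); auto. auto.
  destruct (dom2 (fun k l => a * (x k * x l) * SS T i k l) (fun k l => Rabs a * Rabs (x k) * Rabs (x l))) as [A1 [A2 A3]]; auto.
  intros k l. pose proof (SS_le1 T T_nonneg T_sum1 i k l).
  rewrite !Rabs_mult. rewrite (Rabs_right (SS T i k l)) by lra.
  assert (0 <= Rabs a * (Rabs (x k) * Rabs (x l))) by (repeat apply Rmult_le_pos; apply Rabs_pos).
  nra.
Qed.

Lemma pt xk xl yk yl X Y : 0 < X -> 0 < Y ->
  Rabs (/X * (xk * xl) - /Y * (yk * yl)) <=
  Rabs xk / X * Rabs (xl - yl) + Rabs (xk - yk) / X * Rabs yl +
  Rabs yk * (Rabs (Y - X) / (X * Y)) * Rabs yl.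
Proof.
  intros HX HY.
  replace (/X * (xk * xl) - /Y * (yk * yl)) with
    (xk / X * (xl - yl) + (xk - yk) / X * yl + yk * ((Y - X) / (X * Y)) * yl) by (field; lra).
  eapply Rle_trans. apply Rabs_triang. apply Rplus_le_compat.
  eapply Rle_trans. apply Rabs_triang. apply Rplus_le_compat.
  all: unfold Rdiv; rewrite ?Rabs_mult, ?Rabs_Rinv by (try apply Rmult_integral_contrapositive; lra).
  all: rewrite ?Rabs_mult, ?(Rabs_right X) by lra; rewrite ?(Rabs_right Y) by lra; lra.
Qed.

Lemma norm1_zero : norm1 (fun _ => 0) = 0.
Proof. unfold norm1. rewrite (Series_ext _ (fun _ => 0)) by (intros; apply Rabs_R0). apply zero_ser. Qed.

Lemma mainL T (T_nonneg : forall i j k l, 0 <= T i j k l)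
  (T_sum1 : forall k l, is_series (fun i => Series (fun j => T i j k l)) 1) x y :
  in_l1 x -> in_l1 y -> norm1 y <= norm1 x ->
  ex_series (fun i => Rabs (Rop T x i - Rop T y i)) /\
  norm1 (fun i => Rop T x i - Rop T y i) <= 3 * norm1 (fun i => x i - y i) /\
  (norm1 x = norm1 y -> norm1 (fun i => Rop T x i - Rop T y i) <= 2 * norm1 (fun i => x i - y i)).
Proof.
  intros Hx Hy HYX.
  pose proof (norm1_nonneg (fun i => x i - y i)) as Hd.
  destruct (classic (x = (fun _ => 0))) as [Hx0|Hx0].
  - assert (Hy0 : y = (fun _ => 0)).
    { destruct (classic (y = (fun _ => 0))) as [H|H]; auto.
      pose proof (norm1_pos y Hy H). rewrite Hx0, norm1_zero in HYX. lra. }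
    assert (E : forall i, Rabs (Rop T x i - Rop T y i) = 0).
    { intros i. rewrite (Rop_zero T x Hx0), (Rop_zero T y Hy0). rewrite Rminus_0_r; apply Rabs_R0. }
    destruct zero_ser as [Z1 Z2].
    split. apply (ex_series_ext (fun _ => 0)); [intros; rewrite E; auto | auto].
    assert (ND : norm1 (fun i => Rop T x i - Rop T y i) = 0).
    { unfold norm1. rewrite (Series_ext _ (fun _ => 0)) by (intros; apply E). exact Z2. }
    rewrite ND. split; intros; lra.
  - pose proof (norm1_pos x Hx Hx0) as HX.
    set (X := norm1 x) in *. set (Y := norm1 y) in *. set (d := norm1 (fun i => x i - y i)) in *.
    destruct (classic (y = (fun _ => 0))) as [Hy0|Hy0].
    + assert (Hdx : d = X).
      { unfold d, X, norm1. apply Series_ext; intros; rewrite Hy0, Rminus_0_r; auto. }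
      destruct (prod_ser (fun k => Rabs (x k) * / X) (fun l => Rabs (x l))) as [P1 [P2 P3]].
      intros; apply Rmult_le_pos. apply Rabs_pos. left; apply Rinv_0_lt_compat; auto.
      intros; apply Rabs_pos. apply ex_series_scal_r; auto. auto.
      destruct (core T T_nonneg T_sum1 (fun i => Rop T x i - Rop T y i)
        (fun k l => / X * (x k * x l)) (fun k l => Rabs (x k) * / X * Rabs (x l)) d) as [C1 C2]; auto.
      * intros i. rewrite (Rop_zero T y Hy0), (Rop_rep T x Hx0), Rminus_0_r. auto.
      * intros k l. rewrite !Rabs_mult, Rabs_Rinv, (Rabs_right X) by lra. right; ring.
      * rewrite P3, Series_scal_r. change (Series (fun k => Rabs (x k))) with X. rewrite Hdx. right; field; lra.
      * pose proof (C2 : norm1 (fun i => Rop T x i - Rop T y i) <= d) as ND.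
        split; auto. split; intros; lra.
    + pose proof (norm1_pos y Hy Hy0) as HY. fold Y in HY.
      assert (HE : Rabs (Y - X) <= d).
      { pose proof (norm1_tri x y Hx Hy). pose proof (norm1_tri y x Hy Hx).
        rewrite <- norm1_sym in H0. fold X Y d in H, H0. apply Rabs_le; lra. }
      set (q := Rabs (Y - X) / (X * Y)).
      assert (Hq : 0 <= q).
      { unfold q. apply Rmult_le_pos. apply Rabs_pos. left; apply Rinv_0_lt_compat; nra. }
      assert (HX' : 0 <= / X) by (left; apply Rinv_0_lt_compat; auto).
      destruct (prod_ser (fun k => Rabs (x k) * / X) (fun l => Rabs (x l - y l))) as [P1 [P2 P3]].
      intros; apply Rmult_le_pos; auto; apply Rabs_pos. intros; apply Rabs_pos.
      apply ex_series_scal_r; auto. apply l1_diff; auto.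
      destruct (prod_ser (fun k => Rabs (x k - y k) * / X) (fun l => Rabs (y l))) as [Q1 [Q2 Q3]].
      intros; apply Rmult_le_pos; auto; apply Rabs_pos. intros; apply Rabs_pos.
      apply ex_series_scal_r; auto. apply l1_diff; auto. auto.
      destruct (prod_ser (fun k => Rabs (y k) * q) (fun l => Rabs (y l))) as [R1 [R2 R3]].
      intros; apply Rmult_le_pos; auto; apply Rabs_pos. intros; apply Rabs_pos.
      apply ex_series_scal_r; auto. auto.
      destruct (add_ser _ _ P1 P2 Q1 Q2) as [S1 [S2 S3]].
      destruct (add_ser _ _ S1 S2 R1 R2) as [U1 [U2 U3]].
      rewrite S3, P3, Q3, R3, !Series_scal_r in U3. change (Series (fun k => Rabs (x k))) with X in U3.
      change (Series (fun k => Rabs (y k))) with Y in U3.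
      change (Series (fun k => Rabs (x k - y k))) with d in U3.
      assert (Hval : X * / X * d + d * / X * Y + Y * q * Y = d + d * (Y / X) + Rabs (Y - X) * (Y / X)).
      { unfold q. field. lra. }
      assert (Ht : 0 < Y / X <= 1).
      { split. apply Rdiv_lt_0_compat; auto. apply (Rmult_le_reg_r X); auto. unfold Rdiv; rewrite Rmult_assoc, Rinv_l by lra; lra. }
      destruct (core T T_nonneg T_sum1 (fun i => Rop T x i - Rop T y i)
        (fun k l => / X * (x k * x l) - / Y * (y k * y l))
        (fun k l => Rabs (x k) * / X * Rabs (x l - y l) + Rabs (x k - y k) * / X * Rabs (y l)
                     + Rabs (y k) * q * Rabs (y l))
        (d + d * (Y / X) + Rabs (Y - X) * (Y / X))) as [C1 C2]; auto.
      * intros i. rewrite (Rop_rep T x Hx0), (Rop_rep T y Hy0). fold X Y.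
        destruct (rep_ex T T_nonneg T_sum1 x (/ X) i Hx) as [E1 E2].
        destruct (rep_ex T T_nonneg T_sum1 y (/ Y) i Hy) as [F1 F2].
        rewrite <- Series_minus by auto. apply Series_ext; intros k.
        rewrite <- Series_minus by auto. apply Series_ext; intros l. ring.
      * intros k l. apply pt; auto.
      * rewrite U3, Hval. lra.
      * pose proof (C2 : norm1 (fun i => Rop T x i - Rop T y i) <= _) as ND.
        split; auto. split.
        -- eapply Rle_trans. apply ND. nra.
        -- intros HXY. eapply Rle_trans. apply ND. replace (Y - X) with 0 by lra. rewrite Rabs_R0. nra.
Qed.

Theorem proposition1 (T : nat -> nat -> nat -> nat -> R)
  (T_nonneg : forall i j k l, 0 <= T i j k l)
  (T_inner : forall i k l, ex_series (fun j => T i j k l))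
  (T_sum1 : forall k l, is_series (fun i => Series (fun j => T i j k l)) 1) :
  (forall x, in_l1 x -> in_l1 (Rop T x)) /\
  (forall x y, in_l1 x -> in_l1 y ->
     norm1 (fun i => Rop T x i - Rop T y i) <= 3 * norm1 (fun i => x i - y i)) /\
  (forall r, 0 < r -> forall x y, in_M r x -> in_M r y ->
     norm1 (fun i => Rop T x i - Rop T y i) <= 2 * norm1 (fun i => x i - y i)).
Proof.
  split; [|split].
  - intros x Hx.
    assert (H0 : in_l1 (fun _ => 0)).
    { unfold in_l1. apply (ex_series_ext (fun _ => 0)). intros; rewrite Rabs_R0; auto. apply zero_ser. }
    destruct (mainL T T_nonneg T_sum1 x (fun _ => 0) Hx H0) as [A _].
    rewrite norm1_zero; apply norm1_nonneg.
    unfold in_l1. apply (ex_series_ext _ _ (fun i => f_equal Rabs (eq_trans (f_equal (Rminus _) (Rop_zero T _ eq_refl i)) (Rminus_0_r _)))) in A.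
    exact A.
  - intros x y Hx Hy.
    destruct (Rle_dec (norm1 y) (norm1 x)) as [H|H].
    + apply (mainL T T_nonneg T_sum1 x y Hx Hy H).
    + rewrite norm1_sym, (norm1_sym x y).
      apply (mainL T T_nonneg T_sum1 y x Hy Hx). lra.
  - intros r Hr x y [Hx Hnx] [Hy Hny].
    destruct (mainL T T_nonneg T_sum1 x y Hx Hy) as [_ [_ A]]. lra.
    apply A. lra.
Qed.
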